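(* Let $n\ge 1$. It is possible to place $n$ queens on an $n\times n$ symmetric Toeplitz chessboard so that no two queens attack each other if and only if $n \equiv 0$ or $1 \pmod 4$.
   Context: An $n\times n$ symmetric Toeplitz chessboard is one whose square $(i,j)$ ($1\le i,j\le n$) is labeled by a number depending only on $|i-j|$, with distinct values of $|i-j|$ receiving distinct labels (equivalently, square $(i,j)$ is labeled $|i-j|$). Two queens attack each other if they lie in the same row, in the same column, or on squares with the same label. *)

(* Defs.v *)
From mathcomp Require Import all_boot.
Set Implicit Arguments. Unset Strict Implicit. Unset Printing Implicit Defensive.

(* Squares of the n x n board: pairs (i, j) of row and column indices in 'I_n
   (0-based; shifting to 1-based does not change |i - j|). *)
Definition square (n : nat) := ('I_n * 'I_n)%type.

(* Label of square (i,j) on the symmetric Toeplitz board: |i - j|. *)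
Definition label n (s : square n) : nat := ((s.1 - s.2) + (s.2 - s.1))%N.
(* (truncated subtraction: this is |i - j|) *)

Definition attacks n (s t : square n) : bool :=
  [|| s.1 == t.1, s.2 == t.2 | label s == label t].

Definition nonattacking_placement n (Q : {set square n}) : Prop :=
  #|Q| = n /\ forall s t, s \in Q -> t \in Q -> s != t -> ~~ attacks s t.

(* Main.v *)
Require Import Defs.
From mathcomp Require Import all_boot zify.

Lemma perm_iota n (Q : {set square n}) (h : square n -> nat) :
  #|Q| = n -> (forall x, h x < n) -> {in Q &, injective h} ->
  perm_eq (map h (enum Q)) (iota 0 n).
Proof.
move=> cQ hb hi.
have U : uniq (map h (enum Q)).
  rewrite map_inj_in_uniq ?enum_uniq // => x y; rewrite !mem_enum; exact: hi.
apply: uniq_perm => //; first exact: iota_uniq.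
have ss : {subset map h (enum Q) <= iota 0 n}.
  by move=> x /mapP[y _ ->]; rewrite mem_iota add0n hb.
have le : size (iota 0 n) <= size (map h (enum Q)).
  by rewrite size_map size_iota -cardE cQ.
exact: (uniq_min_size U ss le).2.
Qed.

Lemma necessary n (Q : {set square n}) :
  nonattacking_placement Q -> n %% 4 = 0 \/ n %% 4 = 1.
Proof.
case=> cQ H.
have inj (h : square n -> nat) :
  (forall x y, h x = h y -> attacks x y) -> {in Q &, injective h}.
  move=> hA x y xQ yQ e; apply/eqP; apply: contraT => nxy.
  by move: (H x y xQ yQ nxy); rewrite hA.
have P1 : perm_eq (map (fun x : square n => val x.1) (enum Q)) (iota 0 n).
  apply: perm_iota => //; first by move=> x; exact: ltn_ord.
  apply: inj => x y e; rewrite /attacks; apply/orP; left; apply/eqP/val_inj.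
  exact: e.
have P2 : perm_eq (map (fun x : square n => val x.2) (enum Q)) (iota 0 n).
  apply: perm_iota => //; first by move=> x; exact: ltn_ord.
  apply: inj => x y e; rewrite /attacks; apply/orP; right; apply/orP; left.
  apply/eqP/val_inj; exact: e.
have P3 : perm_eq (map (@label n) (enum Q)) (iota 0 n).
  apply: perm_iota => //.
    move=> [a b]; rewrite /label /=; have := ltn_ord a; have := ltn_ord b; lia.
  apply: inj => x y e; rewrite /attacks e eqxx; by rewrite !orbT.
have S k (P : perm_eq (map k (enum Q)) (iota 0 n)) :
    \sum_(x <- enum Q) k x = \sum_(0 <= i < n) i.
  transitivity (\sum_(i <- map k (enum Q)) i); first by rewrite big_map.
  by rewrite (perm_big _ P) /index_iota subn0.
have E : \sum_(x <- enum Q) (label x + (minn (val x.1) (val x.2) + minn (val x.1) (val x.2))) =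
         \sum_(x <- enum Q) (val x.1 + val x.2).
  apply: eq_bigr => x _. case: x => a b. rewrite /label /=. lia.
rewrite big_split /= (S _ P3) !big_split /= (S _ P1) (S _ P2) bin2_sum bin2 in E.
set M := \sum_(_ <- _) _ in E.
have : n * n.-1 = 2 * (M + M).
  move: E; set c := (n * n.-1)./2.
  have : odd (n * n.-1) = false.
    by rewrite oddM; case: n {cQ H P1 P2 P3 S M c inj Q} => // m /=; rewrite andNb.
  move=> ho E.
  have h2 : (n * n.-1) = c.*2 by rewrite /c -[LHS](odd_double_half) ho.
  lia.
move=> e.
clearbody M; case: n {cQ H P1 P2 P3 S E inj Q} e => [|m] e; first by left.
rewrite /= in e.
have hr := ltn_pmod m (isT : 0 < 4).
rewrite (divn_eq m 4) in e *.
move: (m %/ 4) (m %% 4) hr e => q r hr e.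
case: r hr e => [|[|[|[|r]]]] // hr e; nia.
Qed.

Definition dist (a b : nat) := (a - b) + (b - a).

Lemma construct n (f : nat -> nat) :
  (forall i, i < n -> f i < n) ->
  (forall i j, i < n -> j < n -> f i = f j -> i = j) ->
  (forall i j, i < n -> j < n -> dist i (f i) = dist j (f j) -> i = j) ->
  exists Q : {set square n}, nonattacking_placement Q.
Proof.
move=> Hf Hi Hd.
pose g := fun i : 'I_n => (i, Ordinal (Hf _ (ltn_ord i))) : square n.
exists (g @: [set: 'I_n]); split.
  by rewrite card_imset ?cardsT ?card_ord // => i j [].
move=> s t /imsetP[i _ ->] /imsetP[j _ ->] neq.
have ij : i != j by apply: contraNneq neq => ->.
rewrite /attacks /= (negbTE ij) /=; apply/norP; split.
  apply/negP => /eqP /(congr1 val) /= /(Hi _ _ (ltn_ord i) (ltn_ord j)) e.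
  by move/negP: ij; apply; apply/eqP/val_inj.
apply/negP => /eqP /(Hd _ _ (ltn_ord i) (ltn_ord j)) e.
by move/negP: ij; apply; apply/eqP/val_inj.
Qed.

Definition f0 t i :=
  if i == 0 then 2*t-1
  else if i <= t then 4*t - i
  else if i <= 2*t-1 then 4*t-1-i
  else if i <= 3*t-2 then 4*t-2-i
  else if i == 3*t-1 then 3*t-1
  else 4*t-1-i.

Definition f1 t i :=
  if i == 0 then 2*t-1
  else if i <= t then 4*t+1 - i
  else if i <= 2*t then 4*t-i
  else if i <= 3*t-2 then 4*t-1-i
  else if i == 3*t-1 then 3*t
  else 4*t-i.

Ltac splitf := rewrite /f0 /f1 /dist; repeat case: ifP; rewrite ?eqn0Ngt; move=> *; lia.

Lemma f0_ok t : 0 < t ->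
  (forall i, i < 4*t -> f0 t i < 4*t) /\
  (forall i j, i < 4*t -> j < 4*t -> f0 t i = f0 t j -> i = j) /\
  (forall i j, i < 4*t -> j < 4*t -> dist i (f0 t i) = dist j (f0 t j) -> i = j).
Proof.
move=> t0; split; [|split].
- move=> i; rewrite /f0; repeat case: ifP; move=> *; lia.
- move=> i j; rewrite /f0; repeat case: ifP; move=> *; lia.
- move=> i j; rewrite /f0 /dist; repeat case: ifP; move=> *; lia.
Qed.

Lemma f1_ok t : 1 < t ->
  (forall i, i < 4*t+1 -> f1 t i < 4*t+1) /\
  (forall i j, i < 4*t+1 -> j < 4*t+1 -> f1 t i = f1 t j -> i = j) /\
  (forall i j, i < 4*t+1 -> j < 4*t+1 -> dist i (f1 t i) = dist j (f1 t j) -> i = j).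
Proof.
move=> t0; split; [|split].
- move=> i; rewrite /f1; repeat case: ifP; move=> *; lia.
- move=> i j; rewrite /f1; repeat case: ifP; move=> *; lia.
- move=> i j; rewrite /f1 /dist; repeat case: ifP; move=> *; lia.
Qed.

Definition f5 i := nth 0 [:: 2; 4; 1; 3; 0] i.

Lemma small5 : exists Q : {set square 5}, nonattacking_placement Q.
Proof.
apply: (@construct 5 f5).
- by move=> i; do 5?[case: i => [|i] //].
- by move=> i j; do 5?[case: i => [|i] //]; do 5?[case: j => [|j] //].
- by move=> i j; do 5?[case: i => [|i] //]; do 5?[case: j => [|j] //].
Qed.

Lemma small1 : exists Q : {set square 1}, nonattacking_placement Q.
Proof.
apply: (@construct 1 (fun _ => 0)) => //; by move=> [|i] [|j].
Qed.

Lemma sufficient n : 1 <= n -> n %% 4 = 0 \/ n %% 4 = 1 ->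
  exists Q : {set square n}, nonattacking_placement Q.
Proof.
move=> n1 h.
have e := divn_eq n 4.
move: (n %/ 4) e => t e.
case: h => h; rewrite h in e.
  have t0 : 0 < t by lia.
  have [A [B C]] := f0_ok t t0.
  rewrite e addn0 mulnC; exact: construct A B C.
case: t e => [|[|t]] e.
- rewrite e; exact: small1.
- rewrite e; exact: small5.
- have t0 : 1 < t.+2 by [].
  have [A [B C]] := f1_ok _ t0.
  rewrite e mulnC; exact: construct A B C.
Qed.

Theorem corollary2 (n : nat) : 1 <= n ->
  (exists Q : {set square n}, nonattacking_placement Q) <->
  (n %% 4 = 0 \/ n %% 4 = 1).
Proof.
move=> n1; split.
- by case=> Q HQ; exact: necessary HQ.
- exact: sufficient.
Qed.
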